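(* Consider the decentralized Thompson Sampling algorithm for Bernoulli rewards described in the context, with learning rate $\eta>0$ and prior $\mathrm{Beta}(1,1)$. Then for every round $t\ge1$, agent $i\in[N]$ and arm $k\in[K]$, the distribution $Q^{(i)}_{k,t}$ (with density $q^{(i)}_{k,t}$) from which $\theta^{(i)}_k(t)$ is sampled is $\mathrm{Beta}(\alpha^{(i)}_k(t),\beta^{(i)}_k(t))$, where \[ \alpha^{(i)}_k(t)=\eta\sum_{\tau=1}^{t-1}\sum_{j=1}^N W^{t-\tau}_{ij}Y^{(j)}_{\tau}\mathbf 1\{A^{(j)}_\tau=k\}+1,\qquad \beta^{(i)}_k(t)=\eta\sum_{\tau=1}^{t-1}\sum_{j=1}^N W^{t-\tau}_{ij}(1-Y^{(j)}_{\tau})\mathbf 1\{A^{(j)}_\tau=k\}+1, \] and $W^{s}_{ij}$ denotes the $(i,j)$ entry of the matrix power $W^s$.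
   Context: $N$ agents on a connected undirected graph; $W\in\mathbb R^{N\times N}$ doubly stochastic with nonnegative entries, $W_{ij}>0$ for $i\ne j$ iff $\{i,j\}$ is an edge. $K$ arms with Bernoulli rewards (arm $k$ has mean $\mu_k$), independent across agents, rounds, arms. Let $p_\theta(y)=\theta^y(1-\theta)^{1-y}$ on $[0,1]$. Decentralized Thompson Sampling (learning rate $\eta$, prior density $q_0$ on $[0,1]$): agent $i$ maintains densities $q^{(i)}_{k,t}$ with $q^{(i)}_{k,1}=q_0$. In round $t$, agent $i$ draws $\theta^{(i)}_k(t)\sim q^{(i)}_{k,t}$ independently over $k$, plays $A^{(i)}_t\in\arg\max_k\theta^{(i)}_k(t)$, observes reward $Y^{(i)}_t$, forms $\tilde q^{(i)}_{k,t+1}(\theta)\propto q^{(i)}_{k,t}(\theta)p_\theta(Y^{(i)}_t)^\eta$ (normalized on $[0,1]$) for $k=A^{(i)}_t$ and $\tilde q^{(i)}_{k,t+1}=q^{(i)}_{k,t}$ otherwise, and after communication sets $q^{(i)}_{k,t+1}(\theta)=\frac{\exp(\sum_{j}W_{ij}\log\tilde q^{(j)}_{k,t+1}(\theta))}{\int_0^1\exp(\sum_jW_{ij}\log\tilde q^{(j)}_{k,t+1}(\phi))d\phi}$. *)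

(* Defs.v *)
From HB Require Import structures.
From mathcomp Require Import all_boot all_order all_algebra.
From mathcomp Require Import all_classical all_reals all_analysis.
Set Implicit Arguments. Unset Strict Implicit. Unset Printing Implicit Defensive.
Import Order.TTheory GRing.Theory Num.Theory.
Local Open Scope classical_set_scope.
Local Open Scope ring_scope.

Section DTS.
Variable R : realType.

Definition int01 (f : R -> R) : R := Rintegral lebesgue_measure `[0%R, 1%R] f.

Definition normalize01 (f : R -> R) : R -> R := fun th => f th / int01 f.

Definition beta_unnorm (a b : R) (th : R) : R := th `^ (a - 1) * (1 - th) `^ (b - 1).
Definition betaB (a b : R) : R := int01 (beta_unnorm a b).
Definition beta_density (a b : R) (th : R) : R := beta_unnorm a b th / betaB a b.

Definition bern_lik (th : R) (y : bool) : R := if y then th else 1 - th.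

(* A tau j : arm played by agent j in round tau (tau >= 1),
   Y tau j : reward observed by agent j in round tau.
   dts_q n i k = q^{(i)}_{k, n+1} (density used in round n+1). *)
Fixpoint dts_q (N K : nat) (W : 'M[R]_N) (eta : R)
  (A : nat -> 'I_N -> 'I_K) (Y : nat -> 'I_N -> bool) (n : nat)
  : 'I_N -> 'I_K -> R -> R :=
  match n with
  | 0 => fun _ _ => beta_density 1 1
  | m.+1 =>
    let qtilde := fun (j : 'I_N) (k : 'I_K) =>
      if A m.+1 j == k
      then normalize01 (fun th => dts_q W eta A Y m j k th
                                  * bern_lik th (Y m.+1 j) `^ eta)
      else dts_q W eta A Y m j k in
    fun i k => normalize01
      (fun th => expR (\sum_(j < N) W i j * ln (qtilde j k th)))
  end.

Definition dts_alpha (N K : nat) (W : 'M[R]_N) (eta : R)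
  (A : nat -> 'I_N -> 'I_K) (Y : nat -> 'I_N -> bool) (t : nat) (i : 'I_N) (k : 'I_K) : R :=
  eta * (\sum_(1 <= tau < t) \sum_(j < N)
           (W ^+ (t - tau)) i j * (Y tau j)%:R * (A tau j == k)%:R) + 1.
Definition dts_beta (N K : nat) (W : 'M[R]_N) (eta : R)
  (A : nat -> 'I_N -> 'I_K) (Y : nat -> 'I_N -> bool) (t : nat) (i : 'I_N) (k : 'I_K) : R :=
  eta * (\sum_(1 <= tau < t) \sum_(j < N)
           (W ^+ (t - tau)) i j * (1 - (Y tau j)%:R) * (A tau j == k)%:R) + 1.

Definition comm_edge (N : nat) (W : 'M[R]_N) : rel 'I_N :=
  fun i j => (i != j) && (0 < W i j).

End DTS.

(* Main.v *)
Require Import Defs.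
From HB Require Import structures.
From mathcomp Require Import all_boot all_order all_algebra.
From mathcomp Require Import all_classical all_reals all_analysis.
From mathcomp Require Import measurable_realfun.
From mathcomp Require Import ring lra.
Import Order.TTheory GRing.Theory Num.Theory.
Local Open Scope classical_set_scope.
Local Open Scope ring_scope.



Section Aux.
Variable R : realType.
Local Notation mu := (@lebesgue_measure R).

Lemma int01_ext (f g : R -> R) : measurable_fun (`]0%R, 1%R[ : set R) g ->
  {in `]0%R, 1%R[, f =1 g} -> int01 f = int01 g.
Proof.
move=> mg fg.
have mf : measurable_fun (`]0%R, 1%R[ : set R) f.
  apply: (eq_measurable_fun g) mg => x xD; rewrite fg//; exact: (set_mem xD).
rewrite /int01 /Rintegral.
rewrite (@integral_itv_bndoo _ 0 1 (fun x => (f x)%:E) true false); last first.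
  exact/measurable_EFinP.
rewrite (@integral_itv_bndoo _ 0 1 (fun x => (g x)%:E) true false); last first.
  exact/measurable_EFinP.
congr fine; apply: eq_integral => x xD /=; rewrite fg//; exact: (set_mem xD).
Qed.

Lemma mbeta (a b : R) : measurable_fun setT (beta_unnorm a b).
Proof.
apply: measurable_funM; first exact: measurable_powR.
have mB : measurable_fun setT (fun x : R => 1 - x).
  by apply: measurable_funB.
have := measurableT_comp (measurable_powR (b - 1)) mB.
by [].
Qed.

Lemma powR_le1 (x p : R) : 0 <= x <= 1 -> 0 <= p -> x `^ p <= 1.
Proof.
move=> /andP[x0 x1] p0; have [->|xn0] := eqVneq x 0.
  by rewrite /powR eqxx; case: (p == 0).
rewrite -(powRr0 x); apply: ger_powR => //.
by rewrite x1 andbT lt_neqAle eq_sym xn0.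
Qed.

Lemma beta_unnorm_bnd (a b th : R) : 1 <= a -> 1 <= b -> 0 <= th <= 1 ->
  0 <= beta_unnorm a b th <= 1.
Proof.
move=> a1 b1 /andP[t0 t1]; rewrite /beta_unnorm mulr_ge0 ?powR_ge0//=.
apply: (@le_trans _ _ (1 * 1)); last by rewrite mulr1.
rewrite ler_pM ?powR_ge0//; apply: powR_le1.
- by rewrite t0 t1.
- by rewrite subr_ge0.
- by rewrite subr_ge0 t1 /= lerBlDr lerDl.
- by rewrite subr_ge0.
Qed.

Lemma int_beta (a b : R) : 1 <= a -> 1 <= b ->
  mu.-integrable `[0%R, 1%R] (EFin \o beta_unnorm a b).
Proof.
move=> a1 b1; apply: measurable_bounded_integrable => //.
- suff H : (mu `[0%R, 1%R] < +oo)%E by exact: H.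
  by rewrite lebesgue_measure_itv/= lte01 -EFinD ltry.
- exact: measurable_funS (mbeta a b).
- rewrite /bounded_near; near=> M => t /= t01.
  have t01' : 0 <= t <= 1 by move: t01; rewrite /= in_itv.
  have /andP[h0 h1] := @beta_unnorm_bnd a b t a1 b1 t01'.
  rewrite ger0_norm //; apply: le_trans h1 _.
  by near: M; apply: nbhs_pinfty_ge.
Unshelve. all: end_near. Qed.

End Aux.



Section Aux2.
Variable R : realType.
Local Notation mu := (@lebesgue_measure R).

Lemma betaB_gt0 (a b : R) : 1 <= a -> 1 <= b -> 0 < betaB a b.
Proof.
move=> a1 b1.
pose c : R := (4^-1) `^ (a - 1) * (4^-1) `^ (b - 1).
have c0 : 0 < c by rewrite /c mulr_gt0 // powR_gt0.
have I := @int_beta R a b a1 b1.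
rewrite /betaB /int01 /Rintegral.
have fin : (\int[mu]_(x in `[0%R, 1%R]) (beta_unnorm a b x)%:E)%E \is a fin_num.
  exact: (integrable_fin_num _ I).
have le : ((c / 2)%:E <= \int[mu]_(x in `[0%R, 1%R]) (beta_unnorm a b x)%:E)%E.
  have h1 : (\int[mu]_(x in `[4^-1%R, (3 / 4)%R]) (beta_unnorm a b x)%:E <= \int[mu]_(x in `[0%R, 1%R]) (beta_unnorm a b x)%:E)%E.
    apply: ge0_subset_integral => //.
    - apply/measurable_EFinP; exact: measurable_funS (@mbeta R a b).
    - move=> x; rewrite /= in_itv /= => /andP[x0 x1].
      have xx : 0 <= x <= 1 by rewrite x0 x1.
      by have /andP[h _] := @beta_unnorm_bnd R a b x a1 b1 xx; rewrite lee_fin.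
    - move=> x; rewrite /= !in_itv /= => /andP[x0 x1]; apply/andP; split.
        by apply: le_trans x0.
      by apply: le_trans x1 _; lra.
  apply: le_trans h1.
  apply: (@le_trans _ _ (\int[mu]_(x in `[4^-1%R, (3 / 4)%R]) (cst c%:E) x)%E).
    rewrite integral_cst //.
    rewrite [X in (_ * X)%E](_ : _ = (2^-1)%:E); last first.
      apply: eq_trans (@lebesgue_measure_itv R `[4^-1%R, (3 / 4)%R]) _.
      rewrite /= ifT; last by rewrite lte_fin; lra.
      by rewrite -EFinD; congr EFin; lra.
    by rewrite -EFinM.
  apply: ge0_le_integral => //.
  - by move=> x _; rewrite lee_fin ltW.
  - apply/measurable_EFinP; exact: measurable_funS (@mbeta R a b).
  - move=> x; rewrite /= in_itv /= => /andP[x0 x1]; rewrite lee_fin /c /beta_unnorm.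
    apply: ler_pM; rewrite ?powR_ge0 //.
    + apply: ge0_ler_powR; rewrite ?subr_ge0 //= ?nnegrE //; lra.
    + apply: ge0_ler_powR; rewrite ?subr_ge0 //= ?nnegrE //; lra.
rewrite -lte_fin fineK //; apply: lt_le_trans le; rewrite lte_fin; lra.
Qed.

End Aux2.



Section Aux3.
Variable R : realType.
Local Notation mu := (@lebesgue_measure R).

Lemma normalize_scaled (f : R -> R) (C a b : R) : C != 0 -> 1 <= a -> 1 <= b ->
  {in `]0%R, 1%R[, f =1 fun x => C * beta_unnorm a b x} ->
  {in `]0%R, 1%R[, normalize01 f =1 beta_density a b}.
Proof.
move=> C0 a1 b1 fE x x01.
rewrite /normalize01 fE // (@int01_ext R f (fun x => C * beta_unnorm a b x)) //;
  last first.
  apply: measurable_funM => //.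
  exact: measurable_funS (@mbeta R a b).
rewrite /int01 RintegralZl //; last exact: (@int_beta R a b a1 b1).
rewrite /beta_density /betaB /int01 invfM mulrACA mulfV // mul1r.
reflexivity.
Qed.

Lemma step_agent (al be et : R) (y : bool) (q : R -> R) :
  1 <= al -> 1 <= be -> 0 < et ->
  {in `]0%R, 1%R[, q =1 beta_density al be} ->
  {in `]0%R, 1%R[, normalize01 (fun th => q th * bern_lik th y `^ et) =1
     beta_density (al + et * (y%:R)) (be + et * (1 - y%:R))}.
Proof.
move=> a1 b1 e0 qE.
have B0 := @betaB_gt0 R al be a1 b1.
apply: (@normalize_scaled _ (betaB al be)^-1).
- by rewrite invr_eq0 gt_eqF.
- by case: y; rewrite ?mulr1 ?mulr0 ?addr0 ?subrr //; lra.
- by case: y; rewrite ?subrr ?subr0 ?mulr1 ?mulr0 ?addr0 //; lra.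
move=> x x01; have := x01; rewrite in_itv /= => /andP[x0 x1].
rewrite qE // /beta_density /beta_unnorm.
case: y => /=.
- rewrite mulr1 subrr mulr0 addr0.
  rewrite (_ : al + et - 1 = (al - 1) + et); last ring.
  rewrite [x `^ (al - 1 + et)]powRD; last by rewrite (gt_eqF x0) implybT.
  move: (x `^ (al - 1)) (x `^ et) ((1 - x) `^ (be - 1)) (betaB al be) => p1 p2 p3 B.
  ring.
- rewrite mulr0 addr0 subr0 mulr1.
  have x1' : 0 < 1 - x by lra.
  rewrite (_ : be + et - 1 = (be - 1) + et); last ring.
  rewrite [(1 - x) `^ (be - 1 + et)]powRD; last by rewrite (gt_eqF x1') implybT.
  move: (x `^ (al - 1)) ((1 - x) `^ et) ((1 - x) `^ (be - 1)) (betaB al be) => p1 p2 p3 B.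
  ring.
Qed.

Lemma step_comm (n : nat) (w : 'I_n -> R) (al be : 'I_n -> R)
  (q : 'I_n -> R -> R) :
  (forall j, 0 <= w j) -> (forall j, 1 <= al j) -> (forall j, 1 <= be j) ->
  (forall j, {in `]0%R, 1%R[, q j =1 beta_density (al j) (be j)}) ->
  {in `]0%R, 1%R[, normalize01 (fun th => expR (\sum_(j < n) w j * ln (q j th))) =1
   beta_density (\sum_(j < n) w j * (al j - 1) + 1)
                (\sum_(j < n) w j * (be j - 1) + 1)}.
Proof.
move=> w0 a1 b1 qE.
set P := \sum_(j < n) w j * (al j - 1).
set Q := \sum_(j < n) w j * (be j - 1).
set L := \sum_(j < n) w j * ln (betaB (al j) (be j)).
have P0 : 0 <= P by apply: sumr_ge0 => j _; rewrite mulr_ge0 // subr_ge0.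
have Q0 : 0 <= Q by apply: sumr_ge0 => j _; rewrite mulr_ge0 // subr_ge0.
apply: (@normalize_scaled _ (expR (- L))).
- by rewrite gt_eqF // expR_gt0.
- by rewrite lerDr.
- by rewrite lerDr.
move=> x x01; have := x01; rewrite in_itv /= => /andP[x0 x1].
have x1' : 0 < 1 - x by lra.
rewrite (eq_bigr (fun j => w j * ((al j - 1) * ln x + (be j - 1) * ln (1 - x)
          - ln (betaB (al j) (be j))))); last first.
  move=> j _; rewrite qE // /beta_density /beta_unnorm.
  have Bp := @betaB_gt0 R (al j) (be j) (a1 j) (b1 j).
  rewrite ln_div; last by rewrite posrE.
    by rewrite lnM ?ln_powR // posrE powR_gt0.
  by rewrite posrE mulr_gt0 // powR_gt0.
have -> : \sum_(j < n) w j * ((al j - 1) * ln x + (be j - 1) * ln (1 - x)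
          - ln (betaB (al j) (be j))) = P * ln x + Q * ln (1 - x) - L.
  rewrite /P /Q /L !mulr_suml -sumrN -!big_split /=.
  by apply: eq_bigr => j _; ring.
rewrite /beta_unnorm !addrK !expRD.
rewrite /powR (gt_eqF x0) (gt_eqF x1').
by rewrite [_ * _ * expR (- L)]mulrC mulrA.
Qed.

End Aux3.



Section Aux4.
Variable R : realType.

Lemma Wpow_ge0 (N : nat) (W : 'M[R]_N) : (forall i j, 0 <= W i j) ->
  forall n i j, 0 <= (W ^+ n) i j.
Proof.
move=> W0; elim=> [|n IH] i j.
  by rewrite expr0 mxE ler0n.
rewrite exprS -mulmxE mxE; apply: sumr_ge0 => l _; exact: mulr_ge0.
Qed.

Definition SS (N : nat) (W : 'M[R]_N) (g : nat -> 'I_N -> R) (t : nat) (i : 'I_N) :=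
  \sum_(1 <= tau < t) \sum_(l < N) (W ^+ (t - tau)) i l * g tau l.

Arguments SS {N}.

Lemma Srec (N : nat) (W : 'M[R]_N) (g : nat -> 'I_N -> R) m i :
  SS W g m.+2 i = \sum_(j < N) W i j * (SS W g m.+1 j + g m.+1 j).
Proof.
rewrite /SS big_nat_recr //= subSnn expr1.
under [RHS]eq_bigr do rewrite mulrDr.
rewrite big_split /=; congr (_ + _).
under [RHS]eq_bigr do rewrite big_distrr /=.
rewrite [RHS]exchange_big /=.
rewrite big_nat_cond [RHS]big_nat_cond; apply: eq_bigr => tau /andP[/andP[t1 tm] _].
rewrite subSn; last by apply: ltnW.
rewrite exprS -mulmxE.
under eq_bigr do rewrite mxE big_distrl /=.
rewrite exchange_big /=; apply: eq_bigr => j _; rewrite big_distrr /=.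
by apply: eq_bigr => l _; rewrite mulrA.
Qed.

Lemma alpha_S (N K : nat) (W : 'M[R]_N) (eta : R)
  (A : nat -> 'I_N -> 'I_K) (Y : nat -> 'I_N -> bool) t i k :
  dts_alpha W eta A Y t i k =
  eta * SS W (fun tau l => (Y tau l)%:R * (A tau l == k)%:R) t i + 1.
Proof.
rewrite /dts_alpha /SS; congr (_ * _ + 1); apply: eq_bigr => tau _.
by apply: eq_bigr => l _; rewrite mulrA.
Qed.

Lemma beta_S (N K : nat) (W : 'M[R]_N) (eta : R)
  (A : nat -> 'I_N -> 'I_K) (Y : nat -> 'I_N -> bool) t i k :
  dts_beta W eta A Y t i k =
  eta * SS W (fun tau l => (1 - (Y tau l)%:R) * (A tau l == k)%:R) t i + 1.
Proof.
rewrite /dts_beta /SS; congr (_ * _ + 1); apply: eq_bigr => tau _.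
by apply: eq_bigr => l _; rewrite mulrA.
Qed.

Lemma SS_ge0 (N : nat) (W : 'M[R]_N) (g : nat -> 'I_N -> R) t i :
  (forall i j, 0 <= W i j) -> (forall tau l, 0 <= g tau l) -> 0 <= SS W g t i.
Proof.
move=> W0 g0; apply: sumr_ge0 => tau _; apply: sumr_ge0 => l _.
by apply: mulr_ge0 => //; apply: Wpow_ge0.
Qed.

End Aux4.



Theorem lemma7 (R : realType) (N K : nat) (W : 'M[R]_N) (eta : R)
  (W_nonneg : forall i j, 0 <= W i j)
  (W_row : forall i, \sum_(j < N) W i j = 1)
  (W_col : forall j, \sum_(i < N) W i j = 1)
  (W_undirected : forall i j, (0 < W i j) = (0 < W j i))
  (W_connected : forall i j, connect (comm_edge W) i j)
  (eta_pos : 0 < eta)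
  (A : nat -> 'I_N -> 'I_K) (Y : nat -> 'I_N -> bool) :
  forall (t : nat), (1 <= t)%N ->
  forall (i : 'I_N) (k : 'I_K) (th : R), th \in `]0, 1[ ->
    dts_q W eta A Y t.-1 i k th
    = beta_density (dts_alpha W eta A Y t i k) (dts_beta W eta A Y t i k) th.
Proof.
move=> t; case: t => // m _ /=.
have ge0_ya : forall tau l k, 0 <= (Y tau l)%:R * (A tau l == k)%:R :> R.
  by move=> tau l k; rewrite mulr_ge0.
have ge0_yb : forall tau l k, 0 <= (1 - (Y tau l)%:R) * (A tau l == k)%:R :> R.
  by move=> tau l k; rewrite mulr_ge0 //; case: (Y tau l); rewrite ?subrr ?subr0.
have a1 : forall t i k, 1 <= dts_alpha W eta A Y t i k.
  move=> t i k; rewrite alpha_S lerDr; apply: mulr_ge0; first exact: ltW.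
  exact: (@SS_ge0 R N W _ t i W_nonneg (fun tau l => ge0_ya tau l k)).
have b1 : forall t i k, 1 <= dts_beta W eta A Y t i k.
  move=> t i k; rewrite beta_S lerDr; apply: mulr_ge0; first exact: ltW.
  exact: (@SS_ge0 R N W _ t i W_nonneg (fun tau l => ge0_yb tau l k)).
elim: m => [|m IH] i k th th01.
  by rewrite /dts_alpha /dts_beta !big_geq // !mulr0 !add0r.
pose al j := dts_alpha W eta A Y m.+1 j k
             + eta * (Y m.+1 j)%:R * (A m.+1 j == k)%:R.
pose be j := dts_beta W eta A Y m.+1 j k
             + eta * (1 - (Y m.+1 j)%:R) * (A m.+1 j == k)%:R.
have al1 : forall j, 1 <= al j.
  move=> j; apply: (le_trans (a1 m.+1 j k)); rewrite lerDl -mulrA.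
  by apply: mulr_ge0; [exact: ltW | exact: ge0_ya].
have be1 : forall j, 1 <= be j.
  move=> j; apply: (le_trans (b1 m.+1 j k)); rewrite lerDl -mulrA.
  by apply: mulr_ge0; [exact: ltW | exact: ge0_yb].
pose qt j := if A m.+1 j == k
   then normalize01 (fun th => dts_q W eta A Y m j k th * bern_lik th (Y m.+1 j) `^ eta)
   else dts_q W eta A Y m j k.
have qtE : forall j, {in `]0%R, 1%R[, qt j =1 beta_density (al j) (be j)}.
  move=> j; rewrite /qt /al /be; case: eqP => _.
    rewrite !mulr1; apply: step_agent => //.
    by move=> x hx; apply: IH.
  by rewrite !mulr0 !addr0 => x hx; apply: IH.
have H := @step_comm R N (W i) al be qt (W_nonneg i) al1 be1 qtE th th01.
etransitivity; first exact: H.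
congr beta_density.
- rewrite alpha_S Srec mulr_sumr; congr (_ + 1); apply: eq_bigr => j _.
  rewrite /al alpha_S; ring.
- rewrite beta_S Srec mulr_sumr; congr (_ + 1); apply: eq_bigr => j _.
  rewrite /be beta_S; ring.
Qed.
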